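(* Let $F$ be a field, $n\ge 2$, and let $r_1,\ldots,r_m$ be strictly upper triangular matrix units in $M_n(F)$ (i.e. each $r_l=e_{i_lj_l}$ with $i_l<j_l$) such that the associative product $r_1r_2\cdots r_m\neq 0$. Then for $\sigma\in\mathcal{S}_m$: (i) $r_{\sigma^{-1}(1)}r_{\sigma^{-1}(2)}\cdots r_{\sigma^{-1}(m)}\neq 0$ if and only if $\sigma$ is the identity; (ii) the left-normed commutator $[r_{\sigma^{-1}(1)},r_{\sigma^{-1}(2)},\ldots,r_{\sigma^{-1}(m)}]\neq 0$ if and only if $\sigma\in\mathscr{T}_m$.
   Context: $e_{ij}$ denotes the matrix unit with $1$ in position $(i,j)$ and $0$ elsewhere. Left-normed commutators: $[x_1,x_2]=x_1x_2-x_2x_1$ and $[x_1,\ldots,x_k]=[[x_1,\ldots,x_{k-1}],x_k]$ for $k>2$. $\mathcal{S}_m$ is the group of bijections of $I_m=\{1,\ldots,m\}$, with $\sigma\circ\tau$ meaning apply $\tau$ first. $\mathscr{T}_m=\{\sigma\in\mathcal{S}_m \mid \exists t\in I_m:\ \sigma(1)>\sigma(2)>\cdots>\sigma(t)=1,\ \sigma(t)<\sigma(t+1)<\cdots<\sigma(m)\}$. *)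

(* Defs.v *)
From HB Require Import structures.
From mathcomp Require Import all_boot all_order all_algebra all_fingroup.
Set Implicit Arguments. Unset Strict Implicit. Unset Printing Implicit Defensive.
Import GRing.Theory.
Local Open Scope ring_scope.

(* Matrix commutator [A,B] = AB - BA (using the general matrix product *m,
   so no ring structure on 'M_n is needed). *)
Definition mcomm (F : fieldType) (n : nat) (A B : 'M[F]_n) : 'M[F]_n :=
  A *m B - B *m A.

Definition mxprod (F : fieldType) (n : nat) (s : seq 'M[F]_n) : 'M[F]_n :=
  foldr (fun A B => A *m B) 1%:M s.

(* Left-normed commutator [x_1, ..., x_k] = [[x_1,...,x_{k-1}],x_k];
   for a single element it is x_1 itself (the empty list gives 0, never used). *)
Definition lcomm (F : fieldType) (n : nat) (s : seq 'M[F]_n) : 'M[F]_n :=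
  match s with
  | [::] => 0
  | x :: s' => foldl (@mcomm F n) x s'
  end.

(* The set T_m, with I_m = {0,...,m-1} (0-based): sigma is in T_m iff there is
   t with sigma(0) > sigma(1) > ... > sigma(t) = 0 and
   sigma(t) < sigma(t+1) < ... < sigma(m-1). *)
Definition inTm (m : nat) (s : 'S_m) : Prop :=
  exists t : 'I_m,
    nat_of_ord (s t) = 0%N /\
    (forall a b : 'I_m, (a < b)%N -> (b <= t)%N -> (s b < s a)%N) /\
    (forall a b : 'I_m, (t <= a)%N -> (a < b)%N -> (s a < s b)%N).

(* Main.v *)
Require Import Defs.
From HB Require Import structures.
From mathcomp Require Import all_boot all_order all_algebra all_fingroup zify.
Set Implicit Arguments. Unset Strict Implicit. Unset Printing Implicit Defensive.
Import GRing.Theory.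
Local Open Scope ring_scope.

Lemma prod_delta (F : fieldType) n (g : nat -> 'M[F]_n) (I J : nat -> 'I_n) :
  (forall k, g k = delta_mx (I k) (J k)) -> forall len lo,
  mxprod (map g (iota lo len.+1)) =
  (all (fun k => J k == I k.+1) (iota lo len))%:R *: delta_mx (I lo) (J (lo + len)%N).
Proof.
move=> hg; elim=> [|len IH] lo.
  by rewrite /mxprod /= mulmx1 scale1r addn0 hg.
have -> : iota lo len.+2 = lo :: iota lo.+1 len.+1 by [].
have := IH lo.+1; rewrite map_cons /mxprod /= => ->.
rewrite -scalemxAr hg mul_delta_mx_cond addSnnS.
by case: (J lo == I lo.+1); case: all; rewrite /= ?scale1r ?scale0r ?mulr0n ?mulr1n.
Qed.

Lemma mcomm_delta (F : fieldType) n (c : F) (p q u v : 'I_n) :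
  mcomm (c *: delta_mx p q) (delta_mx u v) =
  c *: ((q == u)%:R *: delta_mx p v - (v == p)%:R *: delta_mx u q).
Proof.
by rewrite /mcomm -scalemxAl -scalemxAr !mul_delta_mx_cond scalerBr !scaler_nat.
Qed.

Lemma delta_neq0 (F : fieldType) n (c : F) (p q : 'I_n) : c != 0 -> c *: delta_mx p q != 0.
Proof.
move=> hc; apply/eqP => /matrixP/(_ p q); rewrite !mxE !eqxx /= mulr1 => h.
by rewrite h eqxx in hc.
Qed.

Lemma lcomm_step (F : fieldType) n (g : nat -> 'M[F]_n) k :
  lcomm (map g (iota 0 k.+2)) = mcomm (lcomm (map g (iota 0 k.+1))) (g k.+1).
Proof.
have -> : iota 0 k.+2 = 0%N :: (iota 1 k ++ [:: k.+1]) by rewrite -addn1 iotaD.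
have -> : iota 0 k.+1 = 0%N :: iota 1 k by [].
by rewrite !map_cons /= map_cat foldl_cat.
Qed.

Definition Qp m (s : 'S_m) := forall x y z : 'I_m, (x < y)%N -> (y < z)%N ->
  (s y < s x)%N \/ (s y < s z)%N.

Lemma Qp_inTm m (s : 'S_m.+1) : Qp s <-> inTm s.
Proof.
split.
  move=> hQ.
  pose t := (s^-1 ord0)%g.
  have st : s t = ord0 by rewrite permKV.
  have pos : forall a, a != t -> (0 < s a)%N.
    move=> a; rewrite lt0n; apply: contra => /eqP h.
    by rewrite -(inj_eq (@perm_inj _ s)) st; apply/eqP/val_inj.
  exists t; split; first by rewrite st.
  split.
    move=> a b ab bt; have at' : a != t by apply: contraTneq ab => ->; rewrite -leqNgt.
    case: (ltngtP b t) bt => // [bt _|/val_inj -> _]; last by rewrite st pos.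
    by case: (hQ a b t ab bt); rewrite // st.
  move=> a b ta ab; have bt : b != t by apply: contraTneq ab => ->; rewrite -leqNgt.
  case: (ltngtP t a) ta => // [ta _|/val_inj <- _]; last by rewrite st pos.
  by case: (hQ t a b ta ab); rewrite // st.
case=> t [_ [hd hi]] x y z xy yz.
case: (leqP y t) => yt; first by left; apply: hd.
by right; apply: hi => //; apply: ltnW.
Qed.

Theorem mainTheorem2 (F : fieldType) (n m : nat) (hn : (2 <= n)%N) (hm : (0 < m)%N)
    (r : 'I_m -> 'M[F]_n)
    (hr : forall l : 'I_m, exists i j : 'I_n, (i < j)%N /\ r l = delta_mx i j)
    (hprod : mxprod [seq r k | k <- enum 'I_m] != 0)
    (sigma : 'S_m) :
  (mxprod [seq r (sigma^-1 k)%g | k <- enum 'I_m] != 0 <-> sigma = 1%g) /\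
  (lcomm [seq r (sigma^-1 k)%g | k <- enum 'I_m] != 0 <-> inTm sigma).
Proof.
case: m hm r hr hprod sigma => // m _ r hr hprod sigma.
have hr' : forall l, exists ij : 'I_n * 'I_n, (ij.1 < ij.2)%N /\ r l = delta_mx ij.1 ij.2.
  by move=> l; case: (hr l) => i [j h]; exists (i, j).
have [f hf] := fin_all_exists hr'.
pose I l := (f l).1; pose J l := (f l).2.
have hrIJ : forall l, r l = delta_mx (I l) (J l) by move=> l; case: (hf l).
have hlt : forall l, (I l < J l)%N by move=> l; case: (hf l).
have E0 : [seq r k | k <- enum 'I_m.+1] = map (fun k => r (inord k)) (iota 0 m.+1).
  by rewrite -val_enum_ord -map_comp; apply: eq_map => k /=; rewrite inord_val.
rewrite E0 (@prod_delta _ _ _ (fun k => I (inord k)) (fun k => J (inord k))) in hprod;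
  last by move=> k; rewrite hrIJ.
have hb : all (fun k => J (inord k) == I (inord k.+1)) (iota 0 m).
  by move: hprod; case: all => //; rewrite scale0r eqxx.
have chain : forall k, (k < m)%N -> J (inord k) = I (inord k.+1).
  by move=> k hk; apply/eqP; move/allP: hb; apply; rewrite mem_iota.
pose a k := if (k < m.+1)%N then val (I (inord k)) else (val (J (inord m)) + (k - m.+1))%N.
have ha : forall k, (a k < a k.+1)%N.
  move=> k; rewrite /a; case: (ltngtP k m) => [km|mk|->].
  - rewrite !ltnS (ltnW km) km -chain //; exact: hlt.
  - have h1 : (k < m.+1)%N = false by lia.
    have h2 : (k.+1 < m.+1)%N = false by lia.
    by rewrite h1 h2 ltn_add2l subSn.
  - by rewrite ltnSn ltnn subnn addn0 hlt.
have a_inc : forall x y, (x < y)%N -> (a x < a y)%N := homo_ltn ltn_trans ha.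
have a_inj : forall x y, a x = a y -> x = y.
  move=> x y h; case: (ltngtP x y) => // /a_inc; rewrite h ltnn //.
have hIa : forall u : 'I_m.+1, val (I u) = a u by move=> u; rewrite /a ltn_ord inord_val.
have hJa : forall u : 'I_m.+1, val (J u) = a u.+1.
  move=> u; rewrite /a; case: ifP => h.
    have -> : u = inord u by rewrite inord_val.
    by rewrite chain ?inordK //; lia.
  have eu : (u : nat) = m by have := ltn_ord u; lia.
  rewrite eu subnn addn0; congr val; congr J; apply/val_inj; rewrite /= inordK //.
have eqJI : forall u v : 'I_m.+1, (J u == I v) = (u.+1 == v :> nat).
  by move=> u v; rewrite -val_eqE hJa hIa; apply/eqP/eqP => [/a_inj|->].
have E1 : [seq r (sigma^-1 k)%g | k <- enum 'I_m.+1] =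
    map (fun k => r ((sigma^-1)%g (inord k))) (iota 0 m.+1).
  by rewrite -val_enum_ord -map_comp; apply: eq_map => k /=; rewrite inord_val.
rewrite E1; split.
  rewrite (@prod_delta _ _ _ (fun k => I ((sigma^-1)%g (inord k))) (fun k => J ((sigma^-1)%g (inord k)))); last by move=> k; rewrite hrIJ.
  split.
    move=> h.
    have hb2 : all (fun k => J ((sigma^-1)%g (inord k)) == I ((sigma^-1)%g (inord k.+1))) (iota 0 m).
      by move: h; case: all => //; rewrite scale0r eqxx.
    have ch : forall k, (k < m)%N -> (((sigma^-1)%g (inord k)).+1 = (sigma^-1)%g (inord k.+1) :> nat).
      move=> k hk; apply/eqP; rewrite -eqJI; move/allP: hb2; apply; rewrite mem_iota; lia.
    have cl : forall k, (k <= m)%N -> ((sigma^-1)%g (inord k) = (sigma^-1)%g (inord 0) + k :> nat)%N.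
      elim=> [|k IH] hk; first by rewrite addn0.
      by rewrite -ch // IH ?addnS //; apply: ltnW.
    have s0 : ((sigma^-1)%g (inord 0) = 0 :> nat)%N.
      have := cl m (leqnn m); have := ltn_ord ((sigma^-1)%g (inord m)); lia.
    have hS : (sigma^-1)%g = 1%g.
      apply/permP => x; rewrite perm1; apply/val_inj.
      have := cl x; rewrite -ltnS ltn_ord inord_val s0 => /(_ isT) //.
    by rewrite -[sigma]invgK hS invg1.
  move=> ->; rewrite invg1.
  have -> : all (fun k => J ((1%g : 'S_m.+1) (inord k)) == I ((1%g : 'S_m.+1) (inord k.+1))) (iota 0 m).
    apply/allP => k; rewrite mem_iota => hk; rewrite !perm1 eqJI !inordK //; lia.
  by apply: delta_neq0; rewrite oner_neq0.
rewrite -Qp_inTm.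
pose g k := r ((sigma^-1)%g (inord k)).
have sig_eq : forall x y, (sigma x == sigma y :> nat) = (x == y).
  by move=> x y; rewrite val_eqE (inj_eq (@perm_inj _ sigma)).
have claim : forall k, (k <= m)%N ->
  (lcomm (map g (iota 0 k.+1)) = 0 /\ ~ Qp sigma) \/
  (exists lo hi : 'I_m.+1, (lo <= hi)%N /\
     (forall x : 'I_m.+1, (sigma x <= k)%N = (lo <= x <= hi)%N) /\
     (exists c : F, c != 0 /\ lcomm (map g (iota 0 k.+1)) = c *: delta_mx (I lo) (J hi)) /\
     (forall x y z : 'I_m.+1, (x < y)%N -> (y < z)%N -> (sigma y <= k)%N ->
        (sigma y < sigma x)%N \/ (sigma y < sigma z)%N)).
  elim=> [_|k IH hk].
    right; pose l := (sigma^-1)%g (inord 0).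
    have sl : (sigma l = 0 :> nat) by rewrite permKV inordK.
    have hx : forall x, (sigma x <= 0)%N = (x == l).
      by move=> x; rewrite leqn0 -sig_eq sl.
    exists l, l; split; first by [].
    split; first by move=> x; rewrite hx -val_eqE /=; lia.
    split; first by exists 1; rewrite oner_neq0 scale1r /= /g hrIJ.
    move=> x y z xy yz; rewrite hx => /eqP yl; left.
    have : x != y by apply: contraTneq xy => ->; rewrite yl ltnn.
    rewrite -sig_eq yl sl; lia.
  pose l := (sigma^-1)%g (inord k.+1).
  have sl : (sigma l = k.+1 :> nat) by rewrite permKV inordK.
  have hxl : forall x, (sigma x == k.+1 :> nat) = (x == l) by move=> x; rewrite -sl sig_eq.
  rewrite lcomm_step.
  have gl : g k.+1 = delta_mx (I l) (J l) by rewrite /g hrIJ.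
  rewrite gl.
  case: (IH (ltnW hk)) => [[-> nQ]|[lo [hi [lohi [hint [[c [c0 ->]] hQ]]]]]].
    by left; rewrite /mcomm mul0mx mulmx0 subrr.
  rewrite mcomm_delta !eqJI.
  have lout : ~~ (lo <= l <= hi)%N by rewrite -hint sl ltnn.
  have out : forall y : 'I_m.+1, ~~ (lo <= y <= hi)%N -> y != l -> (k.+1 < sigma y)%N.
    move=> y h1 h2; rewrite -hint -hxl in h1 h2; lia.
  have hint' : forall x, (sigma x <= k.+1)%N = (x == l) || (lo <= x <= hi)%N.
    by move=> x; rewrite -hint -hxl; lia.
  case Ea : (hi.+1 == l :> nat); case Eb : (l.+1 == lo :> nat).
  - lia.
  - right; exists lo, l; split; first lia.
    split; first by move=> x; rewrite hint' -val_eqE /=; lia.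
    split; first by exists c; rewrite c0 scale0r subr0 scale1r.
    move=> x y z xy yz; rewrite leq_eqVlt ltnS => /orP[|]; last by apply: hQ.
    rewrite hxl => /eqP yl; right; rewrite yl sl; apply: out.
      rewrite negb_and -ltnNge; apply/orP; right; move: yz; rewrite yl; lia.
    by apply: contraTneq yz => ->; rewrite yl ltnn.
  - right; exists l, hi; split; first lia.
    split; first by move=> x; rewrite hint' -val_eqE /=; lia.
    split; first by exists (- c); rewrite oppr_eq0 c0 scale0r sub0r scale1r scalerN scaleNr.
    move=> x y z xy yz; rewrite leq_eqVlt ltnS => /orP[|]; last by apply: hQ.
    rewrite hxl => /eqP yl; left; rewrite yl sl; apply: out.
      rewrite negb_and -ltnNge; apply/orP; left; move: xy; rewrite yl; lia.
    by apply: contraTneq xy => ->; rewrite yl ltnn.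
  - left; split; first by rewrite !scale0r subrr scaler0.
    move=> hQ'.
    have [ll|hl] : (l < lo)%N \/ (hi < l)%N by lia.
      have yb : (l.+1 < m.+1)%N by have := ltn_ord lo; lia.
      have := hQ' l (Ordinal yb) lo; rewrite /= ltnSn => /(_ isT).
      have -> : (l.+1 < lo)%N by lia.
      have o := out (Ordinal yb); move: o; rewrite -val_eqE /=.
      have -> : (lo <= l.+1 <= hi)%N = false by lia.
      have -> : (l.+1 == l) = false by lia.
      move=> /(_ isT isT) o /(_ isT).
      have : (sigma lo <= k)%N by rewrite hint leqnn lohi.
      lia.
    have yb : (hi.+1 < m.+1)%N by have := ltn_ord l; lia.
    have := hQ' hi (Ordinal yb) l; rewrite /= ltnSn => /(_ isT).
    have -> : (hi.+1 < l)%N by lia.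
    have o := out (Ordinal yb); move: o; rewrite -val_eqE /=.
    have -> : (lo <= hi.+1 <= hi)%N = false by lia.
    have -> : (hi.+1 == l) = false by lia.
    move=> /(_ isT isT) o /(_ isT).
    have : (sigma hi <= k)%N by rewrite hint leqnn lohi.
    lia.
change (lcomm (map g (iota 0 m.+1)) != 0 <-> Qp sigma).
case: (claim m (leqnn m)) => [[-> nQ]|[lo [hi [_ [_ [[c [c0 ->]] hQ]]]]]].
  by rewrite eqxx; split.
split=> [_|_]; last exact: delta_neq0.
move=> x y z xy yz; apply: hQ => //; rewrite -ltnS; exact: ltn_ord.
Qed.
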